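(* Take $\Omega=(0,\infty)$. The set $S=(0,\tfrac14]\cup\{\tfrac13,1\}$ is a fundamental set for the gamma function, i.e. $\mathrm{Cl}_\Omega(S)=(0,\infty)$.
   Context: Let $\Omega$ be either $(0,\infty)$ or $D=\mathbb{C}\setminus\{0,-1,-2,\dots\}$. An admissible instance (relative to $\Omega$) is one of the following finite lists of points, all entries of which are required to lie in $\Omega$: (i) $(z+1,\,z)$ for $z\in\Omega$ with $z+1\in\Omega$ (corresponding to the identity $\Gamma(z+1)=z\Gamma(z)$); (ii) $(z,\,1-z)$ for $z\in\Omega\setminus\mathbb{Z}$ with $1-z\in\Omega$ (corresponding to $\Gamma(z)\Gamma(1-z)=\pi/\sin(\pi z)$); (iii) for an integer $n\ge 2$, $\big(z,\,\tfrac{z}{n},\,\tfrac{z+1}{n},\dots,\tfrac{z+n-1}{n}\big)$ (corresponding to Gauss's multiplication formula $(2\pi)^{(n-1)/2}n^{1/2-z}\Gamma(z)=\prod_{j=0}^{n-1}\Gamma(\tfrac{z+j}{n})$). For $B\subseteq\Omega$, a point $p\in\Omega$ is obtained from $B$ in one step if there is an admissible instance in which $p$ occurs exactly once as an entry and every other entry lies in $B$. Set $B_0=B$, $B_{i+1}=B_i\cup\{p: p \text{ obtained from } B_i \text{ in one step}\}$, and $\mathrm{Cl}_\Omega(B)=\bigcup_{i\ge0}B_i$ (the set of points at which the value of $\Gamma$ is determined by its values on $B$ via finitely many applications of the identities). For $A,B\subseteq\Omega$ write $A\preceq B$ if $A\subseteq \mathrm{Cl}_\Omega(B)$. A set $S\subseteq\Omega$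 is a fundamental set (for $\Gamma$ on $\Omega$) if $\mathrm{Cl}_\Omega(S)=\Omega$. *)

(* Defs.v *)
From Stdlib Require Import Reals List.
Import ListNotations.
Open Scope R_scope.

Definition admissible (Omega : R -> Prop) (l : list R) : Prop :=
  (* (i)  Gamma(z+1) = z Gamma(z) *)
  (exists z : R, Omega z /\ Omega (z + 1) /\ l = [z + 1; z])
  \/
  (* (ii) reflection formula, z not an integer *)
  (exists z : R, Omega z /\ (forall k : Z, z <> IZR k) /\ Omega (1 - z)
                 /\ l = [z; 1 - z])
  \/
  (* (iii) Gauss multiplication formula, n >= 2 *)
  (exists (z : R) (n : nat), (2 <= n)%nat /\
       l = z :: map (fun j : nat => (z + INR j) / INR n) (seq 0 n) /\
       Forall Omega l).

Definition one_step (Omega : R -> Prop) (B : R -> Prop) (p : R) : Prop :=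
  Omega p /\
  exists l : list R, admissible Omega l /\
    exists l1 l2 : list R, l = l1 ++ p :: l2 /\ ~ In p l1 /\ ~ In p l2 /\
                           Forall B (l1 ++ l2).

Fixpoint Bstep (Omega : R -> Prop) (B : R -> Prop) (i : nat) : R -> Prop :=
  match i with
  | O => B
  | S i' => fun p => Bstep Omega B i' p \/ one_step Omega (Bstep Omega B i') p
  end.

Definition Cl (Omega : R -> Prop) (B : R -> Prop) (p : R) : Prop :=
  exists i : nat, Bstep Omega B i p.

Definition fundamental_set (Omega : R -> Prop) (S : R -> Prop) : Prop :=
  forall p : R, Cl Omega S p <-> Omega p.

Definition Omega_pos : R -> Prop := fun x => 0 < x.

Definition S5 : R -> Prop := fun x => (0 < x /\ x <= 1/4) \/ x = 1/3 \/ x = 1.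

(* Main.v *)
Require Import Defs.
From Stdlib Require Import Reals List Lra Lia.
Import ListNotations.
Open Scope R_scope.

Notation C := (Cl Omega_pos S5).

Lemma Bmono : forall k i p, Bstep Omega_pos S5 i p -> Bstep Omega_pos S5 (k + i) p.
Proof. induction k; intros; simpl; auto. Qed.

Lemma Bmono' : forall i j p, (i <= j)%nat -> Bstep Omega_pos S5 i p -> Bstep Omega_pos S5 j p.
Proof. intros. replace j with ((j - i) + i)%nat by lia. apply Bmono; auto. Qed.

Lemma Forall_bound : forall L, Forall C L -> exists i, Forall (Bstep Omega_pos S5 i) L.
Proof.
  induction L; intros H.
  - exists 0%nat; constructor.
  - inversion H; subst. destruct H2 as [i Hi]. destruct (IHL H3) as [j Hj].
    exists (Nat.max i j). constructor.
    + apply (Bmono' i); [lia|auto].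
    + eapply Forall_impl; [|exact Hj]. intros; apply (Bmono' j); [lia|auto].
Qed.

Lemma step_lemma : forall l l1 p l2, admissible Omega_pos l -> l = l1 ++ p :: l2 ->
  ~ In p l1 -> ~ In p l2 -> Forall C (l1 ++ l2) -> 0 < p -> C p.
Proof.
  intros l l1 p l2 Ha Hl H1 H2 HF Hp.
  destruct (Forall_bound _ HF) as [i Hi].
  exists (S i). simpl. right. split; [exact Hp|].
  exists l. split; [exact Ha|]. exists l1, l2. auto.
Qed.

Lemma shift_up : forall z, 0 < z -> C z -> C (z + 1).
Proof.
  intros z Hz Hc. apply (step_lemma [z+1; z] [] (z+1) [z]).
  - left. exists z. unfold Omega_pos. repeat split; lra.
  - reflexivity.
  - simpl; auto.
  - simpl; intuition lra.
  - simpl; constructor; auto.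
  - lra.
Qed.

Lemma refl : forall z, 0 < z < 1 -> z <> 1/2 -> C z -> C (1 - z).
Proof.
  intros z Hz Hh Hc. apply (step_lemma [z; 1 - z] [z] (1 - z) []).
  - right; left. exists z. unfold Omega_pos. repeat split; try lra.
    intros k Hk. subst z. destruct Hz as [H1 H2].
    apply lt_IZR in H1. replace 1 with (IZR 1) in H2 by reflexivity.
    apply lt_IZR in H2. lia.
  - reflexivity.
  - simpl; intuition lra.
  - simpl; auto.
  - simpl; constructor; auto.
  - lra.
Qed.

Lemma dup_adm : forall z, 0 < z -> admissible Omega_pos [z; z/2; (z+1)/2].
Proof.
  intros z Hz. right; right. exists z, 2%nat. split; [lia|split].
  - simpl. replace ((z + 0) / (1 + 1)) with (z/2) by field. replace ((z + 1) / (1 + 1)) with ((z+1)/2) by field. reflexivity.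
  - unfold Omega_pos. repeat constructor; lra.
Qed.

Lemma half : C (1/2).
Proof.
  apply (step_lemma [1; 1/2; 1] [1] (1/2) [1]).
  - replace [1; 1/2; 1] with [1; 1/2; (1+1)/2] by (f_equal; f_equal; f_equal; field).
    apply dup_adm; lra.
  - reflexivity.
  - simpl; intuition lra.
  - simpl; intuition lra.
  - simpl; constructor; [|constructor; [|constructor]];
      exists 0%nat; simpl; unfold S5; lra.
  - lra.
Qed.

Lemma base : forall y, 0 < y <= 1/4 -> C y.
Proof. intros y Hy. exists 0%nat. simpl. unfold S5. lra. Qed.

Lemma upper : forall y, 3/4 <= y < 1 -> C y.
Proof.
  intros y Hy. replace y with (1 - (1 - y)) by ring.
  apply refl; try lra. apply base; lra.
Qed.

Lemma derive_y : forall y, 1/4 < y < 1/2 -> C (1 - 2*y) -> C y.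
Proof.
  intros y Hy Hc.
  assert (H2 : C (2*y)).
  { replace (2*y) with (1 - (1 - 2*y)) by ring. apply refl; try lra; auto. }
  assert (H3 : C ((2*y+1)/2)).
  { apply upper; lra. }
  replace y with (2*y/2) by field.
  apply (step_lemma [2*y; 2*y/2; (2*y+1)/2] [2*y] (2*y/2) [(2*y+1)/2]).
  - apply dup_adm; lra.
  - reflexivity.
  - simpl; intuition lra.
  - simpl; intuition lra.
  - simpl; constructor; [|constructor]; auto.
  - lra.
Qed.

Lemma lower_ind : forall n y, 0 < y < 1/2 -> Rabs (y - 1/3) * INR (S n) >= 1/12 -> C y.
Proof.
  induction n; intros y Hy Hd.
  - simpl in Hd. rewrite Rmult_1_r in Hd.
    destruct (Rle_lt_dec y (1/4)). { apply base; lra. }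
    apply derive_y; [lra|]. apply base.
    unfold Rabs in Hd; destruct (Rcase_abs (y - 1/3)); lra.
  - destruct (Rle_lt_dec y (1/4)). { apply base; lra. }
    apply derive_y; [lra|]. apply IHn; [lra|].
    replace (1 - 2*y - 1/3) with (-2 * (y - 1/3)) by field.
    rewrite Rabs_mult. rewrite Rabs_left by lra.
    rewrite (S_INR (S n)) in Hd.
    assert (1 <= INR (S n)) by (apply (le_INR 1); lia).
    assert (0 <= Rabs (y - 1/3)) by apply Rabs_pos.
    nra.
Qed.

Lemma lower : forall y, 0 < y < 1/2 -> C y.
Proof.
  intros y Hy.
  destruct (Req_dec y (1/3)) as [E|E].
  { exists 0%nat. simpl. unfold S5. lra. }
  assert (Hd : 0 < Rabs (y - 1/3)) by (apply Rabs_pos_lt; lra).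
  destruct (archimed_cor1 (12 * Rabs (y - 1/3))) as [N [HN HN0]]; [lra|].
  destruct N as [|n]; [lia|].
  apply (lower_ind n); auto.
  assert (0 < INR (S n)) by (apply lt_0_INR; lia).
  apply Rle_ge.
  apply (Rmult_lt_compat_l (INR (S n))) in HN; [|lra].
  rewrite Rinv_r in HN by lra. nra.
Qed.

Lemma unit_int : forall y, 0 < y <= 1 -> C y.
Proof.
  intros y Hy.
  destruct (Rlt_le_dec y (1/2)). { apply lower; lra. }
  destruct (Req_dec y (1/2)) as [E|E]. { subst; apply half. }
  destruct (Req_dec y 1) as [E1|E1]. { exists 0%nat; simpl; unfold S5; lra. }
  replace y with (1 - (1 - y)) by ring. apply refl; try lra. apply lower; lra.
Qed.

Lemma all_ind : forall n x, 0 < x <= INR n + 1 -> C x.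
Proof.
  induction n; intros x Hx.
  - simpl in Hx. apply unit_int; lra.
  - destruct (Rle_lt_dec x 1). { apply unit_int; lra. }
    replace x with ((x - 1) + 1) by ring. apply shift_up; [lra|].
    apply IHn. rewrite S_INR in Hx. lra.
Qed.

Lemma Cl_pos : forall i p, Bstep Omega_pos S5 i p -> 0 < p.
Proof.
  induction i; intros p H; simpl in H.
  - unfold S5 in H; lra.
  - destruct H as [H|[H _]]; auto.
Qed.

Theorem mainTheorem5 : fundamental_set Omega_pos S5.
Proof.
  intros p. split.
  - intros [i Hi]. exact (Cl_pos i p Hi).
  - intros Hp. unfold Omega_pos in Hp.
    destruct (archimed_cor1 (/ p)) as [N [HN HN0]]; [apply Rinv_0_lt_compat; lra|].
    apply (all_ind N). split; [lra|].
    assert (0 < INR N) by (apply lt_0_INR; lia).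
    assert (p < INR N).
    { rewrite <- (Rinv_inv p), <- (Rinv_inv (INR N)).
      apply Rinv_lt_contravar; [|exact HN].
      apply Rmult_lt_0_compat; apply Rinv_0_lt_compat; lra. }
    lra.
Qed.
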